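(* Let $X$ be a compact metric space with metric $d$, let $f:X\to X$ be continuous, and let $\delta>0$. If $C\subset X$ is a countable Li-Yorke chaotic set (resp. Li-Yorke $\delta$-chaotic set), then there exists a strictly increasing sequence $Q$ of positive integers such that $C$ is a distributional chaotic set in the sequence $Q$ (resp. a distributional $\delta$-chaotic set in the sequence $Q$).
   Context: Let $\Delta=\{(x,x):x\in X\}$. A pair $(x,y)$ is a Li-Yorke scrambled pair if $\liminf_{n\to\infty}d(f^n x,f^n y)=0$ and $\limsup_{n\to\infty}d(f^nx,f^ny)>0$; it is a Li-Yorke $\delta$-scrambled pair if $\liminf_{n\to\infty}d(f^n x,f^n y)=0$ and $\limsup_{n\to\infty}d(f^nx,f^ny)>\delta$. A set $C$ is Li-Yorke chaotic (resp. Li-Yorke $\delta$-chaotic) if every $(x,y)\in C\times C\setminus\Delta$ is a Li-Yorke scrambled pair (resp. Li-Yorke $\delta$-scrambled pair). For a strictly increasing sequence $Q=\{m_i\}$ of positive integers, $x,y\in X$, $t>0$, $n\ge 1$, put $\Phi^n_{(xy,Q)}(t)=\frac1n\#\{1\le i\le n: d(f^{m_i}(x),f^{m_i}(y))\le t\}$, $\Phi_{(xy,Q)}(t)=\liminf_{n}\Phi^n_{(xy,Q)}(t)$, $\Phi^\star_{(xy,Q)}(t)=\limsup_n\Phi^n_{(xy,Q)}(t)$. A pair $(x,y)$ is a distributional scrambled pair in $Q$ if $\Phi^\star_{(xy,Q)}(t)=1$ for all $t>0$ and $\Phi_{(xy,Q)}(s)=0$ for some $s>0$; it is a distributional $\delta$-scrambled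 pair in $Q$ if $\Phi^\star_{(xy,Q)}(t)=1$ for all $t>0$ and $\Phi_{(xy,Q)}(\delta)=0$. A set $D$ is a distributional chaotic set (resp. distributional $\delta$-chaotic set) in $Q$ if every $(x,y)\in D\times D\setminus\Delta$ is a distributional scrambled pair (resp. distributional $\delta$-scrambled pair) in $Q$. *)

(* Defs.v *)
From HB Require Import structures.
From mathcomp Require Import all_boot all_order all_algebra.
From mathcomp Require Import all_classical all_reals all_analysis.
Set Implicit Arguments. Unset Strict Implicit. Unset Printing Implicit Defensive.
Import Order.TTheory GRing.Theory Num.Theory.
Local Open Scope classical_set_scope.
Local Open Scope ring_scope.

Section Chaos.
Context {R : realType} {X : metricType R}.
Variable f : X -> X.

Definition orbit_dist (x y : X) : nat -> \bar R :=
  fun n => (mdist (iter n f x) (iter n f y))%:E.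

Definition LY_pair (x y : X) : Prop :=
  limn_einf (orbit_dist x y) = 0%E /\ (0%E < limn_esup (orbit_dist x y))%E.

Definition LY_delta_pair (delta : R) (x y : X) : Prop :=
  limn_einf (orbit_dist x y) = 0%E /\ (delta%:E < limn_esup (orbit_dist x y))%E.

Definition LY_chaotic (C : set X) : Prop :=
  forall x y, C x -> C y -> x <> y -> LY_pair x y.

Definition LY_delta_chaotic (delta : R) (C : set X) : Prop :=
  forall x y, C x -> C y -> x <> y -> LY_delta_pair delta x y.

(* Q = {m_1 < m_2 < ...} is encoded as m : nat -> nat with m i = m_{i+1}. *)
Definition incr_pos_seq (m : nat -> nat) : Prop :=
  (forall i, (0 < m i)%N) /\ (forall i j, (i < j)%N -> (m i < m j)%N).

Definition Phi_n (m : nat -> nat) (x y : X) (t : R) (n : nat) : R :=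
  (#|[set i : 'I_n | mdist (iter (m i) f x) (iter (m i) f y) <= t]|%:R) / n%:R.

(* the sequences (Phi^n)_{n >= 1}, indexed from k = 0 as n = k+1 *)
Definition Phi_lower (m : nat -> nat) (x y : X) (t : R) : \bar R :=
  limn_einf (fun k => (Phi_n m x y t k.+1)%:E).
Definition Phi_upper (m : nat -> nat) (x y : X) (t : R) : \bar R :=
  limn_esup (fun k => (Phi_n m x y t k.+1)%:E).

Definition distr_pair (m : nat -> nat) (x y : X) : Prop :=
  (forall t, 0 < t -> Phi_upper m x y t = 1%E) /\
  (exists s, 0 < s /\ Phi_lower m x y s = 0%E).

Definition distr_delta_pair (delta : R) (m : nat -> nat) (x y : X) : Prop :=
  (forall t, 0 < t -> Phi_upper m x y t = 1%E) /\ Phi_lower m x y delta = 0%E.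

Definition distr_chaotic (m : nat -> nat) (D : set X) : Prop :=
  forall x y, D x -> D y -> x <> y -> distr_pair m x y.

Definition distr_delta_chaotic (delta : R) (m : nat -> nat) (D : set X) : Prop :=
  forall x y, D x -> D y -> x <> y -> distr_delta_pair delta m x y.

End Chaos.

(* Main.v *)
Require Import Defs.
From HB Require Import structures.
From mathcomp Require Import all_boot all_order all_algebra.
From mathcomp Require Import all_classical all_reals all_analysis.
From mathcomp Require Import lra.
Import Order.TTheory GRing.Theory Num.Theory.

Section Part0.

Definition blk (i : nat) : nat := trunc_log 2 (trunc_log 2 i).
Definition tau (i : nat) : nat := logn 2 (blk i).+1.

Lemma tau_block c K : exists L N, [/\ (K <= L)%N, (K * L <= N)%N &
  forall i, (L <= i < N)%N -> tau i = c].
Proof.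
set k := (2 ^ c * (K.*2).+1).-1.
have hk : k.+1 = 2 ^ c * (K.*2).+1 by rewrite /k prednK // muln_gt0 expn_gt0.
have hKk : (K <= k)%N.
  rewrite -ltnS hk; apply: (leq_trans _ (leq_pmull _ _)); last by rewrite expn_gt0.
  by rewrite ltnS -addnn leq_addr.
have e1 : forall n, (n <= 2 ^ n)%N by move=> n; apply/ltnW/ltn_expl.
have hKL : (K <= 2 ^ (2 ^ k))%N.
  by apply: (leq_trans _ (e1 _)); apply: (leq_trans _ (e1 _)).
exists (2 ^ (2 ^ k)), (2 ^ (2 ^ k.+1)); split => //.
- by rewrite expnS mul2n -addnn expnD mulnC leq_mul2l hKL orbT.
- move=> i /andP[hL hN].
  have i0 : (0 < i)%N by apply: leq_trans hL; rewrite expn_gt0.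
  have hb : blk i = k.
    rewrite /blk; apply: trunc_log_eq => //; apply/andP; split.
      exact: trunc_log_max.
    rewrite ltnNge; apply/negP => h.
    have := trunc_logP (isT : 1 < 2) i0.
    move=> h2; have : (2 ^ 2 ^ k.+1 <= i)%N.
      by apply: leq_trans h2; rewrite leq_exp2l.
    by rewrite leqNgt hN.
  rewrite /tau hb hk lognM ?expn_gt0 // pfactorK // logn_coprime ?addn0 //.
  by rewrite coprime2n /= odd_double.
Qed.

End Part0.

Section Part1.

Lemma build_seq (G : nat -> nat -> Prop) :
  (forall i N, exists n, (N < n)%N /\ G i n) ->
  exists m : nat -> nat, incr_pos_seq m /\ forall i, G i (m i).
Proof.
move=> H.
have [g hg] := @choice (nat * nat) nat (fun iN n => (iN.2 < n)%N /\ G iN.1 n)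
  (fun iN => H iN.1 iN.2).
pose pick i N := g (i, N).
have hpick : forall i N, (N < pick i N)%N /\ G i (pick i N) by move=> i N; exact: (hg (i, N)).
pose m := fix m i := if i is i'.+1 then pick i (m i') else pick 0 0.
have hS : forall i, (m i < m i.+1)%N by move=> i; exact: (hpick i.+1 (m i)).1.
exists m; split; last by case=> [|i]; [exact: (hpick 0 0).2 | exact: (hpick i.+1 (m i)).2].
split; last exact: homo_ltn ltn_trans hS.
case=> [|i]; first exact: (hpick 0 0).1.
exact: leq_ltn_trans (leq0n _) (hS i).
Qed.

End Part1.

Section Part2.

Lemma card_sum N (P : nat -> bool) :
  #|[set i : 'I_N | P i]| = (\sum_(0 <= i < N) P i)%N.
Proof.
rewrite -sum1_card big_mkcond big_mkord /=; apply: eq_bigr => i _.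
by rewrite inE; case: (P i).
Qed.

Lemma card_lb N L (P : nat -> bool) :
  (forall i, (L <= i < N)%N -> P i) -> (N - L <= #|[set i : 'I_N | P i]|)%N.
Proof.
move=> H; rewrite card_sum.
have [LN|NL] := leqP L N; last by move: NL => /ltnW; rewrite -subn_eq0 => /eqP ->.
rewrite (@big_cat_nat _ _ _ L) //=.
apply: leq_trans (leq_addl _ _).
rewrite (eq_big_nat _ _ (F2 := fun _ => 1%N)); last by move=> i /H ->.
by rewrite sum_nat_const_nat muln1.
Qed.

Lemma card_ub N L (P : nat -> bool) :
  (forall i, (L <= i < N)%N -> ~~ P i) -> (#|[set i : 'I_N | P i]| <= L)%N.
Proof.
move=> H; rewrite card_sum.
have [LN|NL] := leqP L N; last first.
  apply: (leq_trans _ (ltnW NL)); apply: (@leq_trans (\sum_(0 <= i < N) 1)%N); first exact: leq_sum (fun i _ => leq_b1 (P i)).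
  by rewrite sum_nat_const_nat subn0 muln1.
rewrite (@big_cat_nat _ _ _ L) //=.
rewrite [X in (_ + X)%N]big_nat_cond [X in (_ + X)%N]big1 ?addn0; last first.
  by move=> i /andP[/H /negbTE -> _].
apply: (@leq_trans (\sum_(0 <= i < L) 1)%N); first exact: leq_sum (fun i _ => leq_b1 (P i)).
by rewrite sum_nat_const_nat subn0 muln1.
Qed.

Section CS.
Local Open Scope classical_set_scope.
Lemma card_cs N (P : nat -> bool) :
  #|[set i : 'I_N | P i]| = #|[set i : 'I_N | P i]%SET|.
Proof.
apply: eq_card => i; rewrite [RHS]inE; apply/idP/idP => [/set_mem //|h]; exact: mem_set.
Qed.
End CS.

End Part2.

Section Part3.
Local Open Scope classical_set_scope.
Local Open Scope ring_scope.

Section Ere.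
Context {R : realType}.
Implicit Types (u : (\bar R)^nat).

Lemma esup_range u : limn_esup u = ereal_inf (range (esups u)).
Proof. by rewrite limn_esup_lim; apply/cvg_lim => //; exact: cvg_esups_inf. Qed.

Lemma esup_eq u (l : R) : (forall n, (u n <= l%:E)%E) ->
  (forall e, 0 < e -> forall N, exists n, (N <= n)%N /\ ((l - e)%:E <= u n)%E) ->
  limn_esup u = l%:E.
Proof.
move=> hub hlb; rewrite esup_range; apply/eqP; rewrite eq_le; apply/andP; split.
  apply: ge_ereal_inf; exists (esups u 0); first by exists 0%N.
  by apply: ge_ereal_sup => _ [k _ <-]; exact: hub.
apply: le_ereal_inf_tmp => _ [N _ <-].
apply/lee_addgt0Pr => e e0.
have [n [hn hu]] := hlb e e0 N.
rewrite -[l](subrK e) EFinD; apply: leeD2r.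
apply: (le_trans hu); apply: ereal_sup_ubound; by exists n.
Qed.

Lemma einf_eq0 u : (forall n, (0 <= u n)%E) ->
  (forall e, 0 < e -> forall N, exists n, (N <= n)%N /\ (u n <= e%:E)%E) ->
  limn_einf u = 0%E.
Proof.
move=> h0 he; rewrite /limn_einf (@esup_eq _ 0) ?oppe0 //.
  by move=> n /=; rewrite oppe_le0.
move=> e e0 N; have [n [hn hu]] := he e e0 N; exists n; split => //.
by rewrite /= sub0r EFinN leeN2.
Qed.

Lemma einf0_often u : limn_einf u = 0%E ->
  forall e, 0 < e -> forall N, exists n, (N <= n)%N /\ (u n < e%:E)%E.
Proof.
move=> h e e0 N.
have h' : limn_esup (fun n => - u n)%E = 0%E by apply/eqP; rewrite -oppe_eq0; apply/eqP.
rewrite esup_range in h'.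
have hge : (0 <= esups (fun n => - u n)%E N)%E by rewrite -h'; apply: ereal_inf_lbound; exists N.
have : ((- e)%:E < esups (fun n => - u n)%E N)%E by apply: lt_le_trans hge; rewrite lte_fin oppr_lt0.
case/ereal_sup_gt => _ [n hn <-] hlt; exists n; split => //.
by rewrite EFinN lteN2 in hlt.
Qed.

Lemma esup_often u (a : R) : (a%:E < limn_esup u)%E ->
  forall N, exists n, (N <= n)%N /\ (a%:E < u n)%E.
Proof.
rewrite esup_range => h N.
have : (a%:E < esups u N)%E by apply: lt_le_trans h _; apply: ereal_inf_lbound; exists N.
by case/ereal_sup_gt => _ [n hn <-] hlt; exists n.
Qed.

Lemma pos_below (z : \bar R) : (0 < z)%E -> exists s : R, 0 < s /\ (s%:E < z)%E.
Proof.
case: z => [r||] //=.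
  rewrite lte_fin => r0; exists (r / 2); split; first by rewrite divr_gt0.
  by rewrite lte_fin ltr_pdivrMr // ltr_pMr // ltr1n.
by move=> _; exists 1; split => //; exact: ltry.
Qed.

End Ere.

End Part3.
Local Open Scope classical_set_scope.
Local Open Scope ring_scope.

Lemma realb (R : realType) (L N K : nat) (e : R) : 0 < e -> e^-1 < K%:R -> (K * L <= N)%N -> L%:R <= e * N%:R.
Proof.
move=> e0 hK hKL.
have h1 : 1 < e * K%:R by rewrite -ltr_pdivrMl // mulr1.
have h2 : (K%:R * L%:R <= N%:R :> R) by rewrite -natrM ler_nat.
have h3 : (0 <= L%:R :> R) by [].
nra.
Qed.

Definition dec (c : nat) : nat * nat := odflt (0, 0)%N (unpickle c./2).

Lemma dec_code (p : nat * nat) (b : bool) : dec (b + (pickle p).*2) = p.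
Proof. by rewrite /dec half_bit_double pickleK. Qed.

Lemma odd_code (p : nat * nat) (b : bool) : odd (b + (pickle p).*2) = b.
Proof. by rewrite oddD odd_double addbF; case: b. Qed.

Section Main.
Context {R : realType} {X : metricType R}.
Variable f : X -> X.

Definition dd (x y : X) (n : nat) : R := mdist (iter n f x) (iter n f y).

Lemma main_gen (C : set X) (h : X -> nat) (s : X -> X -> R) :
  {in C &, injective h} ->
  (forall x y, C x -> C y -> x <> y -> 0 < s x y /\
     limn_einf (orbit_dist f x y) = 0%E /\ ((s x y)%:E < limn_esup (orbit_dist f x y))%E) ->
  exists m, incr_pos_seq m /\ forall x y, C x -> C y -> x <> y ->
     (forall t, 0 < t -> Phi_upper f m x y t = 1%E) /\ Phi_lower f m x y (s x y) = 0%E.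
Proof.
move=> hinj hLY.
pose Good i n := forall x y, C x -> C y -> x <> y -> dec (tau i) = (h x, h y) ->
  if odd (tau i) then s x y < dd x y n else dd x y n < (i.+1%:R)^-1.
have hG : forall i N, exists n, (N < n)%N /\ Good i n.
  move=> i N.
  have [[x0 [y0 [Cx0 [Cy0 [xy0 hd0]]]]]|hno] :=
    pselect (exists x y, C x /\ C y /\ x <> y /\ dec (tau i) = (h x, h y)); last first.
    exists N.+1; split => // x y Cx Cy xy hd; exfalso; apply: hno.
    by exists x, y.
  have [s0 [hl hs]] := hLY x0 y0 Cx0 Cy0 xy0.
  have uniq : forall x y, C x -> C y -> dec (tau i) = (h x, h y) -> x = x0 /\ y = y0.
    move=> x y Cx Cy; rewrite hd0 => -[e1 e2].
    by split; apply: hinj; rewrite ?inE.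
  case ho : (odd (tau i)).
    have [n [hn hlt]] := @esup_often _ _ _ hs N.+1.
    exists n; split => // x y Cx Cy xy hd; have [-> ->] := uniq x y Cx Cy hd.
    by rewrite ho; move: hlt; rewrite /orbit_dist lte_fin.
  have [n [hn hlt]] := @einf0_often _ _ hl (i.+1%:R)^-1 ltac:(by rewrite invr_gt0) N.+1.
  exists n; split => // x y Cx Cy xy hd; have [-> ->] := uniq x y Cx Cy hd.
  by rewrite ho; move: hlt; rewrite /orbit_dist lte_fin.
have [m [hm hgood]] := @build_seq Good hG.
exists m; split => // x y Cx Cy xy.
have [s0 _] := hLY x y Cx Cy xy.
set j := pickle (h x, h y).
have hgi : forall (b : bool) i, tau i = (b + j.*2)%N ->
    if b then s x y < dd x y (m i) else dd x y (m i) < (i.+1%:R)^-1.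
  move=> b i hti; have := hgood i x y Cx Cy xy.
  by rewrite hti dec_code odd_code; apply.
split.
- move=> t t0; rewrite /Phi_upper; apply: esup_eq.
    move=> k; rewrite lee_fin /Phi_n ler_pdivrMr ?ltr0Sn // mul1r ler_nat.
    by apply: leq_trans (max_card _) _; rewrite card_ord.
  move=> e e0 N0.
  pose K := (N0 + Num.Def.trunc (e^-1) + Num.Def.trunc (t^-1)).+1.
  have [L [N [hKL hKN hblk]]] := tau_block (false + j.*2) K.
  have hK0 : (0 < K)%N by [].
  have hL0 : (0 < L)%N by apply: leq_trans hKL.
  have hKLL : (K <= K * L)%N by rewrite leq_pmulr.
  have hN : (N0 < N)%N.
    apply: (leq_trans _ hKN); apply: (leq_trans _ hKLL).
    by rewrite /K ltnS -addnA leq_addr.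
  have hLN : (L <= N)%N.
    by apply: (leq_trans _ hKN); rewrite leq_pmull.
  have hN0 : (0 < N)%N by apply: leq_ltn_trans (leq0n N0) hN.
  exists N.-1; split; first by rewrite -ltnS prednK.
  rewrite prednK //.
  have hKt : (Num.Def.trunc t^-1 < K)%N by rewrite ltnS leq_addl.
  have hKe : (Num.Def.trunc e^-1 < K)%N.
    by rewrite ltnS -addnA (addnC (Num.Def.trunc e^-1)) addnA leq_addl.
  have hP : forall i, (L <= i < N)%N -> mdist (iter (m i) f x) (iter (m i) f y) <= t.
    move=> i hi; have /= hlt := hgi false i (hblk i hi).
    apply/ltW/(lt_trans hlt).
    have hti : t^-1 < i.+1%:R.
      apply: lt_le_trans (truncnS_gt _) _; rewrite ler_nat.
      apply: leq_trans hKt (leq_trans hKL (leq_trans (andP hi).1 (leqnSn i))).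
    by rewrite -[t]invrK ltf_pV2 ?posrE ?invr_gt0 ?ltr0Sn.
  have hc : (N - L <= #|[set i : 'I_N | (mdist (iter (m i) f x) (iter (m i) f y) <= t)%R]|)%N.
    rewrite (card_cs N (fun i : nat => mdist (iter (m i) f x) (iter (m i) f y) <= t)).
    exact: (@card_lb N L (fun i : nat => mdist (iter (m i) f x) (iter (m i) f y) <= t) hP).
  have hKe' : e^-1 < K%:R.
    by apply: lt_le_trans (truncnS_gt _) _; rewrite ler_nat.
  have hr := @realb R L N K e e0 hKe' hKN.
  rewrite lee_fin ler_pdivlMr ?ltr0n //.
  move: hc; rewrite -(ler_nat R) natrB //.
  move: hr; set c := (#|_|)%:R; lra.
- rewrite /Phi_lower; apply: einf_eq0.
    by move=> k; rewrite lee_fin /Phi_n divr_ge0.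
  move=> e e0 N0.
  pose K := (N0 + Num.Def.trunc (e^-1)).+1.
  have [L [N [hKL hKN hblk]]] := tau_block (true + j.*2) K.
  have hK0 : (0 < K)%N by [].
  have hL0 : (0 < L)%N by apply: leq_trans hKL.
  have hKLL : (K <= K * L)%N by rewrite leq_pmulr.
  have hN : (N0 < N)%N.
    apply: (leq_trans _ hKN); apply: (leq_trans _ hKLL).
    by rewrite /K ltnS leq_addr.
  have hN0 : (0 < N)%N by apply: leq_ltn_trans (leq0n N0) hN.
  exists N.-1; split; first by rewrite -ltnS prednK.
  rewrite prednK //.
  have hKe : (Num.Def.trunc e^-1 < K)%N by rewrite ltnS leq_addl.
  have hP : forall i, (L <= i < N)%N -> ~~ (mdist (iter (m i) f x) (iter (m i) f y) <= s x y).
    move=> i hi; have /= hlt := hgi true i (hblk i hi).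
    by rewrite -ltNge.
  have hc : (#|[set i : 'I_N | (mdist (iter (m i) f x) (iter (m i) f y) <= s x y)%R]| <= L)%N.
    rewrite (card_cs N (fun i : nat => mdist (iter (m i) f x) (iter (m i) f y) <= s x y)).
    exact: (@card_ub N L (fun i : nat => mdist (iter (m i) f x) (iter (m i) f y) <= s x y) hP).
  have hKe' : e^-1 < K%:R.
    by apply: lt_le_trans (truncnS_gt _) _; rewrite ler_nat.
  have hr := @realb R L N K e e0 hKe' hKN.
  rewrite lee_fin ler_pdivrMr ?ltr0n //.
  move: hc; rewrite -(ler_nat R).
  move: hr; set c := (#|_|)%:R; lra.
Qed.

End Main.

Theorem theorem3p3 (R : realType) (X : metricType R) (f : X -> X) (delta : R)
  (C : set X) :
  compact [set: X] -> continuous f -> 0 < delta -> countable C ->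
  (LY_chaotic f C -> exists m : nat -> nat, incr_pos_seq m /\ distr_chaotic f m C) /\
  (LY_delta_chaotic f delta C ->
     exists m : nat -> nat, incr_pos_seq m /\ distr_delta_chaotic f delta m C).
Proof.
move=> _ _ d0 /countable_injP [h hinj]; split.
- move=> hLY.
  have hex : forall p : X * X, exists s : R, C p.1 -> C p.2 -> p.1 <> p.2 ->
      0 < s /\ (s%:E < limn_esup (orbit_dist f p.1 p.2))%E.
    move=> [x y]; have [[Cx [Cy xy]]|hn] := pselect (C x /\ C y /\ x <> y).
      have [_ hp] := hLY x y Cx Cy xy; have [s [s0 hs]] := pos_below _ hp.
      by exists s.
    by exists 0 => Cx Cy xy; exfalso; apply: hn.
  have [sf hsf] := choice hex.
  have hyp : forall x y, C x -> C y -> x <> y -> 0 < sf (x, y) /\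
     limn_einf (orbit_dist f x y) = 0%E /\ ((sf (x, y))%:E < limn_esup (orbit_dist f x y))%E.
    move=> x y Cx Cy xy; have [h1 h2] := hLY x y Cx Cy xy.
    by have [h3 h4] := hsf (x, y) Cx Cy xy.
  have [m [hm hd]] := @main_gen R X f C h (fun x y => sf (x, y)) hinj hyp.
  exists m; split => // x y Cx Cy xy; have [h1 h2] := hd x y Cx Cy xy.
  split => //; exists (sf (x, y)); split => //; exact: (hsf (x, y) Cx Cy xy).1.
- move=> hLY.
  have hyp : forall x y, C x -> C y -> x <> y -> 0 < delta /\
     limn_einf (orbit_dist f x y) = 0%E /\ (delta%:E < limn_esup (orbit_dist f x y))%E.
    by move=> x y Cx Cy xy; have [h1 h2] := hLY x y Cx Cy xy.
  have [m [hm hd]] := @main_gen R X f C h (fun _ _ => delta) hinj hyp.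
  by exists m; split => // x y Cx Cy xy; have [h1 h2] := hd x y Cx Cy xy.
Qed.
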